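(* Let $C$ be a real random variable satisfying \[ C \overset{d}{=} U_{(1)}\mathbf 1_{\{V<U_{(1)}\}}\,C^{(1)} + (U_{(2)}-U_{(1)})\mathbf 1_{\{U_{(1)}<V<U_{(2)}\}}\,C^{(2)} + (1-U_{(2)})\mathbf 1_{\{V>U_{(2)}\}}\,C^{(3)} + 1 + U_{(2)}\bigl(2-U_{(1)}-U_{(2)}\bigr), \] where $C^{(1)},C^{(2)},C^{(3)}$ are independent copies of $C$, independent of $(U_1,U_2,V)$. Then $C$ also satisfies \[ C \overset{d}{=} X^*\,C' + g(X^*,W^* ), \] where $C'$ is a copy of $C$ independent of $(X^*,W^*,J)$.
   Context: $U_1,U_2,V$ are independent uniform on $(0,1)$; $U_{(1)}=\min\{U_1,U_2\}$, $U_{(2)}=\max\{U_1,U_2\}$. $(X^*,W^* )$ has joint density $f(x,w)=6x$ for $0<x<w<1$ and $0$ elsewhere. $J$ is uniform on $\{1,2,3\}$ and independent of $(X^*,W^* )$; $g(X^*,W^* )=h_J(X^*,W^* )$ with $h_1(x,w)=1+w(2-x-w)$, $h_2(x,w)=1+(1+x-w)(2w-x)$, $h_3(x,w)=1+(1-x)(x+w)$. *)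

(* Defs.v *)
From HB Require Import structures.
From mathcomp Require Import all_boot all_order all_algebra.
From mathcomp Require Import all_classical all_reals all_analysis.
Set Implicit Arguments. Unset Strict Implicit. Unset Printing Implicit Defensive.
Import Order.TTheory GRing.Theory Num.Theory.
Local Open Scope classical_set_scope.
Local Open Scope ring_scope.

Section defs.
Variable R : realType.

Definition ind (b : bool) : R := if b then 1 else 0.

Definition rhs1 (u1 u2 v c1 c2 c3 : R) : R :=
  let m := Num.min u1 u2 in
  let M := Num.max u1 u2 in
  m * ind (v < m) * c1
  + (M - m) * ind ((m < v) && (v < M)) * c2
  + (1 - M) * ind (M < v) * c3
  + 1 + M * (2 - m - M).

Definition h (j : 'I_3) (x w : R) : R :=
  match val j with
  | O => 1 + w * (2 - x - w)
  | S O => 1 + (1 + x - w) * (2 * w - x)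
  | _ => 1 + (1 - x) * (x + w)
  end.

Definition fXW (x w : R) : R := 6 * x * ind ((0 < x) && (x < w) && (w < 1)).

Definition Eunif (F : R -> \bar R) : \bar R :=
  (\int[lebesgue_measure]_(u in `]0%R, 1%R[) F u)%E.

(* law (P(. \in A)) of the right-hand side of the first equation, where
   U1, U2, V are iid uniform(0,1) and C1, C2, C3 are iid with law mu,
   independent of (U1,U2,V): integral against the product law *)
Definition law_rhs1 (mu : probability (measurableTypeR R) R)
    (A : set (measurableTypeR R)) : \bar R :=
  Eunif (fun u1 => Eunif (fun u2 => Eunif (fun v =>
    (\int[mu]_c1 \int[mu]_c2 \int[mu]_c3
       (\1_A (rhs1 u1 u2 v c1 c2 c3))%:E)%E))).

(* law of  Xs * C' + h_J(Xs, Ws)  where the pair (Xs, Ws) has density fXW,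
   J is uniform on {1,2,3} (here indexed 0,1,2), C' has law mu,
   all independent *)
Definition law_rhs2 (mu : probability (measurableTypeR R) R)
    (A : set (measurableTypeR R)) : \bar R :=
  (\sum_(j < 3) (3^-1)%:E *
     \int[lebesgue_measure]_x \int[lebesgue_measure]_w
       ((fXW x w)%:E * \int[mu]_c (\1_A (x * c + h j x w))%:E))%E.

End defs.

(* Main.v *)
Require Import Defs.
From HB Require Import structures.
From mathcomp Require Import all_boot all_order all_algebra.
From mathcomp Require Import all_classical all_reals all_analysis.
From mathcomp Require Import measurable_realfun.
From mathcomp Require Import ring lra.
Import Order.TTheory GRing.Theory Num.Theory.
Local Open Scope classical_set_scope.
Local Open Scope ring_scope.

Definition FF (R : realType) (mu : probability (measurableTypeR R) R)
  (A : set (measurableTypeR R)) (a b : R) : \bar R :=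
  (\int[mu]_c (\1_A (a * c + b))%:E)%E.

Arguments FF {R}.

Lemma FF_ge0 (R : realType) (mu : probability (measurableTypeR R) R) A a b :
  (0 <= FF mu A a b)%E.
Proof. by apply: integral_ge0 => x _; rewrite lee_fin. Qed.

Lemma mFF (R : realType) (mu : probability (measurableTypeR R) R) A :
  measurable A ->
  measurable_fun setT (fun p : R * R => FF mu A p.1 p.2).
Proof.
move=> mA.
have := @measurable_fun_fubini_tonelli_F _ _ _ _ R mu
  (fun q : (R * R) * R => (\1_A (q.1.1 * q.2 + q.1.2))%:E).
apply.
  apply/measurable_EFinP; apply: measurableT_comp; first exact: measurable_indic.
  apply: measurable_funD; last exact: measurableT_comp.
  apply: measurable_funM.
    by apply: measurableT_comp => //; exact: measurableT_comp.
  exact: measurable_snd.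
by move=> x; rewrite lee_fin.
Qed.

Lemma mFFc (R : realType) (mu : probability (measurableTypeR R) R) A
  d (T : measurableType d) (k b : T -> R) :
  measurable A -> measurable_fun setT k -> measurable_fun setT b ->
  measurable_fun setT (fun t => FF mu A (k t) (b t)).
Proof.
move=> mA mk mb.
have := measurableT_comp (@mFF R mu A mA) (measurable_fun_pair mk mb).
by [].
Qed.

Lemma m_ind (R : realType) d (T : measurableType d) (f : T -> bool) :
  measurable_fun setT f -> measurable_fun setT (fun t => ind R (f t)).
Proof.
move=> mf; rewrite /ind.
by apply: measurable_fun_ifT => //.
Qed.

Lemma pf_shift (R : realType) (c : R) (A : set R) : measurable A ->
  lebesgue_measure ((fun x : R => x + c) @^-1` A) = lebesgue_measure A.
Proof.
move=> mA.
have mphi : measurable_fun setT (fun x : R => x + c).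
  by apply: measurable_funD => //.
rewrite -[LHS]/(pushforward lebesgue_measure ((fun x : R => x + c) : R -> measurableTypeR R) A).
apply: esym; apply: lebesgue_measure_unique => // _ [[a b]] _ <-.
rewrite /pushforward /=.
rewrite [X in _ = lebesgue_measure X](_ : _ = `](a - c), (b - c)]%classic); last first.
  apply/seteqP; split => x /=; rewrite !in_itv/= => /andP[h1 h2]; apply/andP; split; lra.
rewrite !lebesgue_measure_itv/= !lte_fin.
have -> : (a - c < b - c) = (a < b) by apply/idP/idP; lra.
case: ifP => // _; congr (_%:E); lra.
Qed.

Lemma pf_refl (R : realType) (c : R) (A : set R) : measurable A ->
  lebesgue_measure ((fun x : R => c - x) @^-1` A) = lebesgue_measure A.
Proof.
move=> mA.
have mphi : measurable_fun setT (fun x : R => c - x).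
  by apply: measurable_funB => //.
rewrite -[LHS]/(pushforward lebesgue_measure ((fun x : R => c - x) : R -> measurableTypeR R) A).
apply: esym; apply: lebesgue_measure_unique => // _ [[a b]] _ <-.
rewrite /pushforward /=.
rewrite [X in _ = lebesgue_measure X](_ : _ = `[(c - b), (c - a)[%classic); last first.
  apply/seteqP; split => x /=; rewrite !in_itv/= => /andP[h1 h2]; apply/andP; split; lra.
rewrite !lebesgue_measure_itv/= !lte_fin.
have -> : (c - b < c - a) = (a < b) by apply/idP/idP; lra.
case: ifP => // _; congr (_%:E); lra.
Qed.

Lemma int_pf (R : realType) (phi : measurableTypeR R -> measurableTypeR R) (f : measurableTypeR R -> \bar R) :
  measurable_fun setT phi ->
  (forall A, measurable A -> lebesgue_measure (phi @^-1` A) = lebesgue_measure A) ->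
  measurable_fun setT f -> (forall x, (0 <= f x)%E) ->
  (\int[lebesgue_measure]_x f (phi x) = \int[lebesgue_measure]_x f x)%E.
Proof.
move=> mphi hphi mf f0.
have H := ge0_integral_pushforward mphi lebesgue_measure measurableT mf (fun y _ => f0 y).
rewrite preimage_setT in H.
rewrite -[LHS]/(\int[lebesgue_measure]_x (f \o phi) x)%E -H.
apply: eq_measure_integral => A mA _; rewrite /pushforward. exact: hphi.
Qed.

Lemma int_shift (R : realType) (c : R) (f : R -> \bar R) :
  measurable_fun setT f -> (forall x, (0 <= f x)%E) ->
  (\int[lebesgue_measure]_x f (x + c)%R = \int[lebesgue_measure]_x f x)%E.
Proof.
move=> mf f0; apply: (@int_pf R (fun x : R => x + c)) => //.
  by apply: measurable_funD.
exact: pf_shift.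
Qed.

Lemma int_refl (R : realType) (c : R) (f : R -> \bar R) :
  measurable_fun setT f -> (forall x, (0 <= f x)%E) ->
  (\int[lebesgue_measure]_x f (c - x)%R = \int[lebesgue_measure]_x f x)%E.
Proof.
move=> mf f0; apply: (@int_pf R (fun x : R => c - x)) => //.
  by apply: measurable_funB.
exact: pf_refl.
Qed.

Local Notation leb := (@lebesgue_measure _).

Lemma intc (R : realType) d (T : measurableType d) (mu : probability T R) (e : \bar R) :
  (\int[mu]_x e = e)%E.
Proof. rewrite integral_cst//. rewrite [X in (_ * X)%E]probability_setT. by rewrite mule1. Qed.

Lemma mjoint_comp (R : realType) (g : R -> R -> \bar R) d (T : measurableType d)
  (a b : T -> R) :
  measurable_fun setT (fun p : R * R => g p.1 p.2) ->
  measurable_fun setT a -> measurable_fun setT b ->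
  measurable_fun setT (fun t => g (a t) (b t)).
Proof.
move=> mg ma mb.
have := measurableT_comp mg (measurable_fun_pair ma mb).
by [].
Qed.

Lemma mpar (R : realType) (g : R -> R -> \bar R) :
  measurable_fun setT (fun p : R * R => g p.1 p.2) -> (forall x y, (0 <= g x y)%E) ->
  measurable_fun setT (fun x : R => \int[@lebesgue_measure R]_y g x y)%E.
Proof.
move=> mg g0.
have := @measurable_fun_fubini_tonelli_F _ _ _ _ R (@lebesgue_measure R)
  (fun p : R * R => g p.1 p.2) mg (fun p => g0 _ _).
by [].
Qed.

Lemma to_prod (R : realType) (g : R -> R -> \bar R) :
  measurable_fun setT (fun p : R * R => g p.1 p.2) -> (forall x y, (0 <= g x y)%E) ->
  (\int[@lebesgue_measure R]_x \int[@lebesgue_measure R]_y g x y =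
   \int[(@lebesgue_measure R) \x (@lebesgue_measure R)]_p g p.1 p.2)%E.
Proof.
move=> mg g0.
have := @fubini_tonelli1 _ _ _ _ R (@lebesgue_measure R) (@lebesgue_measure R)
  (fun p : R * R => g p.1 p.2) mg (fun p => g0 _ _).
by move=> ->.
Qed.

Lemma to_prod2 (R : realType) (g : R -> R -> \bar R) :
  measurable_fun setT (fun p : R * R => g p.1 p.2) -> (forall x y, (0 <= g x y)%E) ->
  (\int[@lebesgue_measure R]_y \int[@lebesgue_measure R]_x g x y =
   \int[(@lebesgue_measure R) \x (@lebesgue_measure R)]_p g p.1 p.2)%E.
Proof.
move=> mg g0.
have := @fubini_tonelli2 _ _ _ _ R (@lebesgue_measure R) (@lebesgue_measure R)
  (fun p : R * R => g p.1 p.2) mg (fun p => g0 _ _).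
by move=> ->.
Qed.

Lemma dswap (R : realType) (g : R -> R -> \bar R) :
  measurable_fun setT (fun p : R * R => g p.1 p.2) -> (forall x y, (0 <= g x y)%E) ->
  (\int[@lebesgue_measure R]_x \int[@lebesgue_measure R]_y g x y =
   \int[@lebesgue_measure R]_y \int[@lebesgue_measure R]_x g x y)%E.
Proof. by move=> mg g0; rewrite to_prod// to_prod2. Qed.

Lemma dadd (R : realType) (g1 g2 : R -> R -> \bar R) :
  measurable_fun setT (fun p : R * R => g1 p.1 p.2) -> (forall x y, (0 <= g1 x y)%E) ->
  measurable_fun setT (fun p : R * R => g2 p.1 p.2) -> (forall x y, (0 <= g2 x y)%E) ->
  (\int[@lebesgue_measure R]_x \int[@lebesgue_measure R]_y (g1 x y + g2 x y) =
   \int[@lebesgue_measure R]_x \int[@lebesgue_measure R]_y g1 x y +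
   \int[@lebesgue_measure R]_x \int[@lebesgue_measure R]_y g2 x y)%E.
Proof.
move=> mg1 g10 mg2 g20.
rewrite (@to_prod R (fun x y => (g1 x y + g2 x y)%E)); last 2 first.
- exact: emeasurable_funD.
- by move=> x y; rewrite adde_ge0.
rewrite to_prod// to_prod//.
apply: ge0_integralD => //.
Qed.

Lemma dscale (R : realType) (g : R -> R -> \bar R) (k : \bar R) :
  measurable_fun setT (fun p : R * R => g p.1 p.2) -> (forall x y, (0 <= g x y)%E) ->
  (0 <= k)%E ->
  (\int[@lebesgue_measure R]_x \int[@lebesgue_measure R]_y (k * g x y) =
   k * \int[@lebesgue_measure R]_x \int[@lebesgue_measure R]_y g x y)%E.
Proof.
move=> mg g0 k0.
transitivity (\int[@lebesgue_measure R]_x (k * \int[@lebesgue_measure R]_y g x y))%E.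
  apply: eq_integral => x _; apply: ge0_integralZl => //.
  exact: (measurable_fun_pair2 (f := fun p : R * R => g p.1 p.2)).
apply: ge0_integralZl => //.
  exact: mpar.
by move=> x _; apply: integral_ge0.
Qed.

Lemma zero_out (R : realType) (D : set R) (f : R -> \bar R) :
  (forall x, ~ D x -> f x = 0%E) ->
  (\int[@lebesgue_measure R]_(x in D) f x = \int[@lebesgue_measure R]_x f x)%E.
Proof.
move=> h; rewrite integral_mkcond; apply: eq_integral => x _.
rewrite /patch; case: ifP => // /negbT; rewrite notin_setE => /h ->//.
Qed.

Arguments FF {R}.

Ltac mreal := repeat (first [ apply: measurable_funD | apply: measurable_funB
  | apply: measurable_funM | apply: measurable_funN | apply: m_ind | apply: measurable_and
  | apply: measurable_fun_ltr | exact: measurable_cst | exact: measurable_fst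
  | exact: measurable_snd | exact: measurable_id ]).

Definition bb (R : realType) (m M : R) : R := 1 + M * (2 - m - M).
Definition cnd (R : realType) (x y : R) : bool := (0 < x) && (x < y) && (y < 1).
Arguments bb {R}. Arguments cnd {R}.

Definition Psi1 (R : realType) mu A (x y : R) : \bar R :=
  ((ind R (cnd x y) * x)%:E * FF mu A x (bb x y))%E.
Definition Psi2 (R : realType) mu A (x y : R) : \bar R :=
  ((ind R (cnd x y) * (y - x))%:E * FF mu A (y - x) (bb x y))%E.
Definition Psi3 (R : realType) mu A (x y : R) : \bar R :=
  ((ind R (cnd x y) * (1 - y))%:E * FF mu A (1 - y) (bb x y))%E.
Arguments Psi1 {R}. Arguments Psi2 {R}. Arguments Psi3 {R}.
Definition Psi (R : realType) mu A (x y : R) : \bar R :=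
  (Psi1 mu A x y + Psi2 mu A x y + Psi3 mu A x y)%E.
Arguments Psi {R}.

Lemma mPsi1 (R : realType) (mu : probability (measurableTypeR R) R) A :
  measurable A -> measurable_fun setT (fun p : R * R => Psi1 mu A p.1 p.2).
Proof.
move=> mA; rewrite /Psi1; apply: emeasurable_funM.
  by apply/measurable_EFinP; rewrite /cnd; mreal.
by apply: mFFc => //; rewrite /bb; mreal.
Qed.

Lemma mPsi2 (R : realType) (mu : probability (measurableTypeR R) R) A :
  measurable A -> measurable_fun setT (fun p : R * R => Psi2 mu A p.1 p.2).
Proof.
move=> mA; rewrite /Psi2; apply: emeasurable_funM.
  by apply/measurable_EFinP; rewrite /cnd; mreal.
by apply: mFFc => //; rewrite /bb; mreal.
Qed.

Lemma mPsi3 (R : realType) (mu : probability (measurableTypeR R) R) A :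
  measurable A -> measurable_fun setT (fun p : R * R => Psi3 mu A p.1 p.2).
Proof.
move=> mA; rewrite /Psi3; apply: emeasurable_funM.
  by apply/measurable_EFinP; rewrite /cnd; mreal.
by apply: mFFc => //; rewrite /bb; mreal.
Qed.

Lemma ind_coef_ge0 (R : realType) (x y c : R) :
  (cnd x y -> 0 <= c) -> 0 <= ind R (cnd x y) * c.
Proof. rewrite /ind; case: cnd => [h|]; last by rewrite mul0r. by rewrite mul1r; apply: h. Qed.

Lemma Psi1_ge0 (R : realType) mu A (x y : R) : (0 <= Psi1 mu A x y)%E.
Proof.
rewrite /Psi1; apply: mule_ge0; last exact: FF_ge0.
rewrite lee_fin; apply: ind_coef_ge0; rewrite /cnd => /andP[/andP[]]; lra.
Qed.
Lemma Psi2_ge0 (R : realType) mu A (x y : R) : (0 <= Psi2 mu A x y)%E.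
Proof.
rewrite /Psi2; apply: mule_ge0; last exact: FF_ge0.
rewrite lee_fin; apply: ind_coef_ge0; rewrite /cnd => /andP[/andP[]]; lra.
Qed.
Lemma Psi3_ge0 (R : realType) mu A (x y : R) : (0 <= Psi3 mu A x y)%E.
Proof.
rewrite /Psi3; apply: mule_ge0; last exact: FF_ge0.
rewrite lee_fin; apply: ind_coef_ge0; rewrite /cnd => /andP[/andP[]]; lra.
Qed.
Lemma Psi_ge0 (R : realType) mu A (x y : R) : (0 <= Psi mu A x y)%E.
Proof. by rewrite /Psi !adde_ge0 ?Psi1_ge0 ?Psi2_ge0 ?Psi3_ge0. Qed.

Lemma mPsi (R : realType) (mu : probability (measurableTypeR R) R) A :
  measurable A -> measurable_fun setT (fun p : R * R => Psi mu A p.1 p.2).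
Proof.
move=> mA; rewrite /Psi.
apply: emeasurable_funD; last exact: mPsi3.
apply: emeasurable_funD; [exact: mPsi1|exact: mPsi2].
Qed.

Arguments FF {R}. Arguments bb {R}. Arguments cnd {R}.

Definition kk (R : realType) (u1 u2 v : R) : R :=
  let m := Num.min u1 u2 in let M := Num.max u1 u2 in
  m * ind R (v < m) + (M - m) * ind R ((m < v) && (v < M)) + (1 - M) * ind R (M < v).
Arguments kk {R}.

Arguments rhs1 {R}.

Lemma tri1 (R : realType) (mu : probability (measurableTypeR R) R) A
  (f : R -> R -> R -> R) a b :
  (forall c1 c2 c3, f c1 c2 c3 = a * c1 + b) ->
  (\int[mu]_c1 \int[mu]_c2 \int[mu]_c3 (\1_A (f c1 c2 c3))%:E)%E = FF mu A a b.
Proof.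
move=> h; rewrite /FF; apply: eq_integral => c1 _.
transitivity (\int[mu]_c2 \int[mu]_c3 (\1_A (a * c1 + b))%:E)%E.
  by apply: eq_integral => c2 _; apply: eq_integral => c3 _; rewrite h.
by rewrite !intc.
Qed.

Lemma tri2 (R : realType) (mu : probability (measurableTypeR R) R) A
  (f : R -> R -> R -> R) a b :
  (forall c1 c2 c3, f c1 c2 c3 = a * c2 + b) ->
  (\int[mu]_c1 \int[mu]_c2 \int[mu]_c3 (\1_A (f c1 c2 c3))%:E)%E = FF mu A a b.
Proof.
move=> h.
transitivity (\int[mu]_c1 \int[mu]_c2 (\1_A (a * c2 + b))%:E)%E.
  apply: eq_integral => c1 _; apply: eq_integral => c2 _.
  transitivity (\int[mu]_c3 (\1_A (a * c2 + b))%:E)%E.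
    by apply: eq_integral => c3 _; rewrite h.
  by rewrite intc.
by rewrite intc.
Qed.

Lemma tri3 (R : realType) (mu : probability (measurableTypeR R) R) A
  (f : R -> R -> R -> R) a b :
  (forall c1 c2 c3, f c1 c2 c3 = a * c3 + b) ->
  (\int[mu]_c1 \int[mu]_c2 \int[mu]_c3 (\1_A (f c1 c2 c3))%:E)%E = FF mu A a b.
Proof.
move=> h.
transitivity (\int[mu]_c1 \int[mu]_c2 \int[mu]_c3 (\1_A (a * c3 + b))%:E)%E.
  apply: eq_integral => c1 _; apply: eq_integral => c2 _.
  by apply: eq_integral => c3 _; rewrite h.
by rewrite !intc.
Qed.

Lemma minmax_le (R : realType) (u1 u2 : R) : Num.min u1 u2 <= Num.max u1 u2.
Proof.
rewrite minEle maxEle; case: ifP => h //.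
by move/negbT: h; rewrite -ltNge => /ltW.
Qed.

Lemma stepA (R : realType) (mu : probability (measurableTypeR R) R) A (u1 u2 v : R) :
  (\int[mu]_c1 \int[mu]_c2 \int[mu]_c3 (\1_A (rhs1 u1 u2 v c1 c2 c3))%:E)%E =
  FF mu A (kk u1 u2 v) (bb (Num.min u1 u2) (Num.max u1 u2)).
Proof.
have mM := @minmax_le R u1 u2.
rewrite /rhs1 /kk /bb.
move: mM; set m := Num.min u1 u2; set M := Num.max u1 u2 => mM.
have [hv|hv] := ltP v m.
  have e2 : (m < v) = false by apply/negP => ?; lra.
  have e3 : (M < v) = false by apply/negP => ?; lra.
  rewrite e2 e3 /ind /=.
  rewrite (_ : m * 1 + (M - m) * 0 + (1 - M) * 0 = m); last by ring.
  by apply: tri1 => c1 c2 c3; ring.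
have [hv2|hv2] := ltP m v.
  have [hv3|hv3] := ltP v M.
    have e3 : (M < v) = false by apply/negP => ?; lra.
    rewrite e3 /ind /=.
    rewrite (_ : m * 0 + (M - m) * 1 + (1 - M) * 0 = M - m); last by ring.
    by apply: tri2 => c1 c2 c3; ring.
  have [hv4|hv4] := ltP M v.
    rewrite /ind /=.
    rewrite (_ : m * 0 + (M - m) * 0 + (1 - M) * 1 = 1 - M); last by ring.
    by apply: tri3 => c1 c2 c3; ring.
  rewrite /ind /=.
  rewrite (_ : m * 0 + (M - m) * 0 + (1 - M) * 0 = 0); last by ring.
  by apply: tri1 => c1 c2 c3; ring.
have e3 : (M < v) = false by apply/negP => ?; lra.
rewrite e3 /ind /=.
rewrite (_ : m * 0 + (M - m) * 0 + (1 - M) * 0 = 0); last by ring.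
by apply: tri1 => c1 c2 c3; ring.
Qed.

Arguments FF {R}. Arguments bb {R}. Arguments cnd {R}. Arguments kk {R}.

Lemma ind_indic (R : realType) (S : set R) (v : R) :
  ind R (v \in S) = \1_S v.
Proof. by rewrite indicE /ind; case: (v \in S). Qed.

Lemma m_ind1 (R : realType) (D : set R) (f : R -> bool) :
  measurable D -> measurable_fun setT f ->
  measurable_fun D (fun v => (ind R (f v))%:E).
Proof.
move=> mD mf; apply: measurable_funTS; apply/measurable_EFinP; exact: m_ind.
Qed.

Lemma Lseg (R : realType) (a b : R) (c : \bar R) :
  (0 <= a)%R -> (a <= b)%R -> (b <= 1)%R -> (0 <= c)%E ->
  (\int[@lebesgue_measure R]_(v in `]0%R, 1%R[) ((ind R ((a < v) && (v < b)))%:E * c) =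
   (b - a)%:E * c)%E.
Proof.
move=> a0 ab b1 c0.
rewrite ge0_integralZr//; last 2 first.
- by apply: m_ind1 => //; mreal.
- by move=> x _; rewrite lee_fin /ind; case: ifP.
congr (_ * _)%E.
transitivity (\int[@lebesgue_measure R]_(v in `]0%R, 1%R[) (\1_(`]a, b[%classic : set R) v)%:E)%E.
  apply: eq_integral => v _; rewrite -ind_indic mem_setE in_itv //=.
rewrite integral_indic//.
rewrite setIidl; last first.
  move=> x /=; rewrite !in_itv /= => /andP[h1 h2]; apply/andP; split; lra.
have H := @lebesgue_measure_itv R (`]a, b[)%O. rewrite /= lte_fin in H.
etransitivity; first exact: H.
case: (ltP a b) => hab; first by rewrite EFinD.
have -> : b = a by lra.
by rewrite subrr.
Qed.

Lemma Lnull (R : realType) (m M : R) (c : \bar R) : (0 <= c)%E ->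
  (\int[@lebesgue_measure R]_(v in `]0%R, 1%R[) ((ind R ((v == m) || (v == M)))%:E * c) = 0)%E.
Proof.
move=> c0.
rewrite ge0_integralZr//; last 2 first.
- apply: m_ind1 => //; apply: measurable_or; apply: measurable_fun_eqr; mreal.
- by move=> x _; rewrite lee_fin /ind; case: ifP.
transitivity (\int[@lebesgue_measure R]_(v in `]0%R, 1%R[) (\1_([set m] `|` [set M]) v)%:E * c)%E.
  congr (_ * _)%E; apply: eq_integral => v _; rewrite -ind_indic in_setU !in_set1 //.
rewrite integral_indic//; last by apply: measurableU.
match goal with |- (?X * _)%E = _ => have -> : X = 0%E end.
  apply/eqP; rewrite eq_le measure_ge0 andbT.
  apply: (@le_trans _ _ (lebesgue_measure ([set m] `|` [set M]))).
    apply: le_measure => //; rewrite inE //.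
    by apply: measurableI => //; apply: measurableU.
    by apply: measurableU.
  apply: (le_trans (measureU2 _ _ _)) => //.
  rewrite -[X in (X + _)%E]/(lebesgue_measure [set m]) -[X in (_ + X)%E]/(lebesgue_measure [set M]).
  by rewrite !lebesgue_measure_set1 adde0.
by rewrite mul0e.
Qed.

Definition Phi (R : realType) mu A (m M : R) : \bar R :=
  (m%:E * FF mu A m (bb m M) + (M - m)%:E * FF mu A (M - m) (bb m M)
   + (1 - M)%:E * FF mu A (1 - M) (bb m M))%E.
Arguments Phi {R}.

Lemma ind_ge0 (R : realType) b : (0 <= (ind R b)%:E)%E.
Proof. by rewrite lee_fin /ind; case: b. Qed.

Lemma stepB (R : realType) (mu : probability (measurableTypeR R) R) A (m M : R) :
  measurable A -> (0 <= m)%R -> (m <= M)%R -> (M <= 1)%R ->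
  (\int[@lebesgue_measure R]_(v in `]0%R, 1%R[)
     FF mu A (m * ind R (v < m) + (M - m) * ind R ((m < v) && (v < M))%R
              + (1 - M) * ind R (M < v))%R (bb m M) = Phi mu A m M)%E.
Proof.
move=> mA m0 mM M1.
set B := bb m M.
set c1 := FF mu A m B. set c2 := FF mu A (M - m) B. set c3 := FF mu A (1 - M) B.
set c4 := FF mu A 0 B.
have I0 : measurable (`]0%R, 1%R[%classic : set R) by exact: measurable_itv.
transitivity (\int[@lebesgue_measure R]_(v in `]0%R, 1%R[)
  ((ind R ((0 < v) && (v < m))%R)%:E * c1 + (ind R ((m < v) && (v < M))%R)%:E * c2
   + (ind R ((M < v) && (v < 1))%R)%:E * c3 + (ind R ((v == m) || (v == M))%R)%:E * c4))%E.
  apply: eq_integral => v; rewrite mem_setE in_itv /= => /andP[v0 v1].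
  have [hv|hv|hv] := ltgtP v m.
  - have e2 : (m < v) = false by apply/negP => ?; lra.
    have e3 : (M < v) = false by apply/negP => ?; lra.
    have e4 : (v == m) = false by apply/eqP => ?; lra.
    have e5 : (v == M) = false by apply/eqP => ?; lra.
    rewrite ?e2 ?e3 ?e4 ?e5 ?v0 ?andbF ?andbT ?orbT ?orbF /ind /= ?mul1e ?mul0e ?adde0 ?add0e.
    by rewrite /c1; congr FF; ring.
  - have e4 : (v == m) = false by apply/eqP => ?; lra.
    have [hv2|hv2|hv2] := ltgtP v M.
    + have e3 : (M < v) = false by apply/negP => ?; lra.
      have e5 : (v == M) = false by apply/eqP => ?; lra.
      rewrite ?e3 ?e4 ?e5 ?andbF ?andbT ?orbT ?orbF /ind /= ?mul1e ?mul0e ?adde0 ?add0e.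
      by rewrite /c2; congr FF; ring.
    + have e5 : (v == M) = false by apply/eqP => ?; lra.
      rewrite ?e4 ?e5 ?v1 ?andbF ?andbT ?orbT ?orbF /ind /= ?mul1e ?mul0e ?adde0 ?add0e.
      by rewrite /c3; congr FF; ring.
    + rewrite ?hv2 ?eqxx ?e4 ?ltxx ?andbF ?andbT ?orbT ?orbF /ind /= ?mul1e ?mul0e ?adde0 ?add0e.
      by rewrite /c4; congr FF; ring.
  - rewrite ?hv ?eqxx ?ltxx /=.
    have e3 : (M < m) = false by apply/negP => ?; lra.
    rewrite ?e3 ?andbF ?andbT ?orbT ?orbF /ind /= ?mul1e ?mul0e ?adde0 ?add0e.
    by rewrite /c4; congr FF; ring.
have n1 : forall v, (`]0%R, 1%R[%classic : set R) v -> (0 <= (ind R ((0 < v) && (v < m))%R)%:E * c1)%E.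
  by move=> v _; apply: mule_ge0; [exact: ind_ge0 | exact: FF_ge0].
have n2 : forall v, (`]0%R, 1%R[%classic : set R) v -> (0 <= (ind R ((m < v) && (v < M))%R)%:E * c2)%E.
  by move=> v _; apply: mule_ge0; [exact: ind_ge0 | exact: FF_ge0].
have n3 : forall v, (`]0%R, 1%R[%classic : set R) v -> (0 <= (ind R ((M < v) && (v < 1))%R)%:E * c3)%E.
  by move=> v _; apply: mule_ge0; [exact: ind_ge0 | exact: FF_ge0].
have n4 : forall v, (`]0%R, 1%R[%classic : set R) v -> (0 <= (ind R ((v == m) || (v == M))%R)%:E * c4)%E.
  by move=> v _; apply: mule_ge0; [exact: ind_ge0 | exact: FF_ge0].
have m1 : measurable_fun (`]0%R, 1%R[%classic : set R) (fun v : R => (ind R ((0 < v) && (v < m))%R)%:E * c1)%E.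
  by apply: emeasurable_funM => //; apply: m_ind1 => //; mreal.
have m2 : measurable_fun (`]0%R, 1%R[%classic : set R) (fun v : R => (ind R ((m < v) && (v < M))%R)%:E * c2)%E.
  by apply: emeasurable_funM => //; apply: m_ind1 => //; mreal.
have m3 : measurable_fun (`]0%R, 1%R[%classic : set R) (fun v : R => (ind R ((M < v) && (v < 1))%R)%:E * c3)%E.
  by apply: emeasurable_funM => //; apply: m_ind1 => //; mreal.
have m4 : measurable_fun (`]0%R, 1%R[%classic : set R) (fun v : R => (ind R ((v == m) || (v == M))%R)%:E * c4)%E.
  apply: emeasurable_funM => //; apply: m_ind1 => //.
  by apply: measurable_or; apply: measurable_fun_eqr; mreal.
rewrite ge0_integralD//; last 2 first.
  by move=> v Iv; rewrite !adde_ge0 ?n1 ?n2 ?n3.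
  by apply: emeasurable_funD => //; apply: emeasurable_funD.
rewrite ge0_integralD//; last 2 first.
  by move=> v Iv; rewrite !adde_ge0 ?n1 ?n2.
  by apply: emeasurable_funD.
rewrite ge0_integralD//.
transitivity (m%:E * c1 + (M - m)%:E * c2 + (1 - M)%:E * c3 + 0)%E; last by rewrite adde0.
congr (_ + _ + _ + _)%E.
- by have := @Lseg R 0 m c1 (lexx _) m0 (le_trans mM M1) (FF_ge0 _ _ _ _ _); rewrite subr0; apply.
- by apply: Lseg => //; exact: FF_ge0.
- by apply: Lseg => //; [exact: le_trans mM | exact: FF_ge0].
- by apply: Lnull; exact: FF_ge0.
Qed.

Arguments FF {R}. Arguments bb {R}. Arguments cnd {R}. Arguments kk {R}.
Arguments rhs1 {R}. Arguments Psi1 {R}. Arguments Psi2 {R}. Arguments Psi3 {R}.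
Arguments Psi {R}. Arguments Phi {R}.
Set Implicit Arguments. Unset Strict Implicit.

Ltac mreal2 := repeat (first [ apply: measurable_funD | apply: measurable_funB
  | apply: measurable_funM | apply: measurable_funN | apply: m_ind | apply: measurable_and
  | apply: measurable_fun_ltr | apply: measurable_minr | apply: measurable_maxr
  | exact: measurable_cst | exact: measurable_fst
  | exact: measurable_snd | exact: measurable_id ]).

Lemma inI (R : realType) (x : R) : (`]0%R, 1%R[%classic : set R) x <-> (0 < x < 1).
Proof. by rewrite /= in_itv /=. Qed.

Lemma mm_bounds (R : realType) (u1 u2 : R) : 0 < u1 < 1 -> 0 < u2 < 1 ->
  [/\ 0 <= Num.min u1 u2, Num.min u1 u2 <= Num.max u1 u2 & Num.max u1 u2 <= 1].
Proof.
move=> /andP[a1 a2] /andP[b1 b2]; split; last 2 first.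
- exact: minmax_le.
- by rewrite maxEle; case: ifP => _; lra.
by rewrite minEle; case: ifP => _; lra.
Qed.

Lemma LHS1 (R : realType) (mu : probability (measurableTypeR R) R) A :
  measurable A ->
  law_rhs1 mu A = (\int[@lebesgue_measure R]_(u1 in `]0%R, 1%R[)
     \int[@lebesgue_measure R]_(u2 in `]0%R, 1%R[)
        Phi mu A (Num.min u1 u2) (Num.max u1 u2))%E.
Proof.
move=> mA; rewrite /law_rhs1 /Eunif.
apply: eq_integral => u1; rewrite inE => /inI hu1.
apply: eq_integral => u2; rewrite inE => /inI hu2.
under eq_integral => v _ do rewrite stepA.
have [h1 h2 h3] := mm_bounds hu1 hu2.
exact: stepB.
Qed.

Lemma Psi_zero (R : realType) mu A (x y : R) : cnd x y = false -> Psi mu A x y = 0%E.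
Proof.
by move=> h; rewrite /Psi /Psi1 /Psi2 /Psi3 h /ind /= !mul0r !mul0e !adde0.
Qed.

Lemma Psi_Phi (R : realType) mu A (x y : R) : cnd x y -> Psi mu A x y = Phi mu A x y.
Proof. by move=> h; rewrite /Psi /Psi1 /Psi2 /Psi3 h /ind /= !mul1r. Qed.

Lemma mPhi_mm (R : realType) (mu : probability (measurableTypeR R) R) A (u1 : R) :
  measurable A ->
  measurable_fun setT (fun u2 : R => Phi mu A (Num.min u1 u2) (Num.max u1 u2)).
Proof.
move=> mA; rewrite /Phi.
apply: emeasurable_funD; first apply: emeasurable_funD.
- apply: emeasurable_funM; first by apply/measurable_EFinP; mreal2.
  by apply: mFFc => //; rewrite /bb; mreal2.
- apply: emeasurable_funM; first by apply/measurable_EFinP; mreal2.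
  by apply: mFFc => //; rewrite /bb; mreal2.
- apply: emeasurable_funM; first by apply/measurable_EFinP; mreal2.
  by apply: mFFc => //; rewrite /bb; mreal2.
Qed.

Lemma mPsi_sym (R : realType) (mu : probability (measurableTypeR R) R) A (u1 : R) :
  measurable A ->
  measurable_fun setT (fun u2 : R => Psi mu A u1 u2 + Psi mu A u2 u1)%E.
Proof.
move=> mA; apply: emeasurable_funD.
  by apply: (@mjoint_comp R (Psi mu A) _ _ (fun _ : R => u1) (fun u2 : R => u2) (@mPsi R mu A mA)); mreal2.
by apply: (@mjoint_comp R (Psi mu A) _ _ (fun u2 : R => u2) (fun _ : R => u1) (@mPsi R mu A mA)); mreal2.
Qed.

Lemma S3 (R : realType) (mu : probability (measurableTypeR R) R) A (u1 : R) :
  measurable A -> 0 < u1 < 1 ->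
  (\int[@lebesgue_measure R]_(u2 in `]0%R, 1%R[)
        Phi mu A (Num.min u1 u2) (Num.max u1 u2) =
   \int[@lebesgue_measure R]_u2 (Psi mu A u1 u2 + Psi mu A u2 u1))%E.
Proof.
move=> mA /andP[a1 a2].
rewrite -(@zero_out R (`]0%R, 1%R[%classic)); last first.
  move=> u2 /inI hu2; rewrite !Psi_zero ?adde0 // /cnd; apply/negbTE/negP;
    move=> /andP[/andP[b1 b2] b3]; apply: hu2; apply/andP; split; lra.
have mD : measurable (`]0%R, 1%R[%classic `\ u1 : set R).
  by apply: measurableD => //; exact: measurable_itv.
rewrite -(integral_setD1 (r := u1)) //; last exact: measurable_funTS (mPhi_mm _ _ mA).
rewrite -[RHS](integral_setD1 (r := u1)) //; last exact: measurable_funTS (mPsi_sym _ _ mA).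
apply: eq_integral => u2; rewrite inE => -[/inI /andP[b1 b2] hne].
have [h|h|h] := ltgtP u1 u2.
- idtac.
  rewrite Psi_Phi; last by rewrite /cnd a1 h b2.
  by rewrite Psi_zero ?adde0 // /cnd; apply/negbTE/negP => /andP[/andP[_ ?] _]; lra.
- idtac.
  rewrite (Psi_Phi _ _ (x := u2)); last by rewrite /cnd b1 h a2.
  by rewrite Psi_zero ?add0e // /cnd; apply/negbTE/negP => /andP[/andP[_ ?] _]; lra.
- by exfalso; apply: hne; rewrite h.
Qed.

Lemma LHS2 (R : realType) (mu : probability (measurableTypeR R) R) A :
  measurable A ->
  law_rhs1 mu A = (\int[@lebesgue_measure R]_u1 \int[@lebesgue_measure R]_u2
                     (Psi mu A u1 u2 + Psi mu A u2 u1))%E.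
Proof.
move=> mA; rewrite LHS1 //.
transitivity (\int[@lebesgue_measure R]_(u1 in `]0%R, 1%R[) \int[@lebesgue_measure R]_u2
                     (Psi mu A u1 u2 + Psi mu A u2 u1))%E.
  by apply: eq_integral => u1; rewrite inE => /inI hu1; exact: S3.
apply: zero_out => u1 /inI hu1.
transitivity (\int[@lebesgue_measure R]_u2 (cst 0%E u2))%E; last exact: integral0.
apply: eq_integral => u2 _.
rewrite !Psi_zero ?adde0 // /cnd; apply/negbTE/negP;
  move=> /andP[/andP[b1 b2] b3]; apply: hu1; apply/andP; split; lra.
Qed.

Lemma Psi_sym_ge0 (R : realType) mu A (x y : R) : (0 <= Psi mu A y x)%E.
Proof. exact: Psi_ge0. Qed.

Lemma mPsi_swap (R : realType) (mu : probability (measurableTypeR R) R) A :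
  measurable A -> measurable_fun setT (fun p : R * R => Psi mu A p.2 p.1).
Proof.
move=> mA.
by apply: (@mjoint_comp R (Psi mu A) _ _ snd fst (@mPsi R mu A mA)).
Qed.

Definition dbl (R : realType) (g : R -> R -> \bar R) :=
  (\int[@lebesgue_measure R]_x \int[@lebesgue_measure R]_y g x y)%E.

Lemma LHS3 (R : realType) (mu : probability (measurableTypeR R) R) A :
  measurable A ->
  law_rhs1 mu A = ((dbl (Psi1 mu A) + dbl (Psi2 mu A) + dbl (Psi3 mu A)) +
                   (dbl (Psi1 mu A) + dbl (Psi2 mu A) + dbl (Psi3 mu A)))%E.
Proof.
move=> mA; rewrite LHS2 //.
rewrite (@dadd R (Psi mu A) (fun x y => Psi mu A y x) (@mPsi R mu A mA)
   (fun x y => @Psi_ge0 R mu A x y) (@mPsi_swap R mu A mA) (fun x y => @Psi_ge0 R mu A y x)).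
rewrite (@dswap R (fun x y => Psi mu A y x) (@mPsi_swap R mu A mA) (fun x y => @Psi_ge0 R mu A y x)).
have E : dbl (Psi mu A) = (dbl (Psi1 mu A) + dbl (Psi2 mu A) + dbl (Psi3 mu A))%E.
  rewrite /dbl /Psi.
  rewrite (@dadd R (fun x y => Psi1 mu A x y + Psi2 mu A x y)%E (Psi3 mu A)); last 4 first.
  - by apply: emeasurable_funD; [exact: mPsi1|exact: mPsi2].
  - by move=> x y; rewrite adde_ge0 ?Psi1_ge0 ?Psi2_ge0.
  - exact: mPsi3.
  - exact: Psi3_ge0.
  rewrite (@dadd R (Psi1 mu A) (Psi2 mu A)) //.
  - exact: mPsi1.
  - exact: Psi1_ge0.
  - exact: mPsi2.
  - exact: Psi2_ge0.
transitivity (dbl (Psi mu A) + dbl (Psi mu A))%E; first by [].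
by rewrite E.
Qed.

Arguments FF {R}. Arguments bb {R}. Arguments cnd {R}. Arguments kk {R}.
Arguments rhs1 {R}. Arguments Psi1 {R}. Arguments Psi2 {R}. Arguments Psi3 {R}.
Arguments Psi {R}. Arguments Phi {R}. Arguments dbl {R}.
Set Implicit Arguments. Unset Strict Implicit.

Definition Q2 (R : realType) mu A (x w : R) : \bar R :=
  ((ind R (cnd x w) * x)%:E * FF mu A x (1 + (1 + x - w) * (2 * w - x)))%E.
Definition Q3 (R : realType) mu A (x w : R) : \bar R :=
  ((ind R (cnd x w) * x)%:E * FF mu A x (1 + (1 - x) * (x + w)))%E.

Lemma cnd2 (R : realType) (x w : R) : cnd (1 - w) (x + (1 - w)) = cnd x w.
Proof.
by rewrite /cnd; apply/idP/idP => /andP[/andP[h1 h2] h3];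
  repeat (apply/andP; split); lra.
Qed.

Lemma cnd3 (R : realType) (x w : R) : cnd (1 - w) (1 - x) = cnd x w.
Proof.
by rewrite /cnd; apply/idP/idP => /andP[/andP[h1 h2] h3];
  repeat (apply/andP; split); lra.
Qed.

Lemma T2eq (R : realType) (mu : probability (measurableTypeR R) R) A :
  measurable A -> dbl (Psi2 mu A) = dbl (Q2 mu A).
Proof.
move=> mA; have mP := @mPsi2 R mu A mA.
have P0 := @Psi2_ge0 R mu A.
rewrite /dbl.
transitivity (\int[@lebesgue_measure R]_u1 \int[@lebesgue_measure R]_x
   Psi2 mu A u1 (x + u1)%R)%E.
  apply: eq_integral => u1 _; apply/esym.
  apply: (@int_shift R u1 (Psi2 mu A u1)) => //.
  by apply: (@mjoint_comp R (Psi2 mu A) _ _ (fun _ : R => u1) (fun x : R => x) mP); mreal2.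
transitivity (\int[@lebesgue_measure R]_w \int[@lebesgue_measure R]_x
   Psi2 mu A (1 - w)%R (x + (1 - w))%R)%E.
  apply/esym.
  apply: (@int_refl R 1 (fun u1 => \int[@lebesgue_measure R]_x Psi2 mu A u1 (x + u1)%R)%E).
    apply: (@mpar R (fun u1 x => Psi2 mu A u1 (x + u1)%R)) => //.
    by apply: (@mjoint_comp R (Psi2 mu A) _ _ fst (fun p : R * R => p.2 + p.1) mP); mreal2.
  by move=> u1; apply: integral_ge0.
transitivity (\int[@lebesgue_measure R]_x \int[@lebesgue_measure R]_w
   Psi2 mu A (1 - w)%R (x + (1 - w))%R)%E.
  apply: (@dswap R (fun w x => Psi2 mu A (1 - w)%R (x + (1 - w))%R)) => //.
  by apply: (@mjoint_comp R (Psi2 mu A) _ _ (fun p : R * R => 1 - p.1)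
     (fun p : R * R => p.2 + (1 - p.1)) mP); mreal2.
apply: eq_integral => x _; apply: eq_integral => w _.
rewrite /Psi2 /Q2 /bb cnd2.
rewrite (_ : x + (1 - w) - (1 - w) = x); last by ring.
by rewrite (_ : 1 + (x + (1 - w)) * (2 - (1 - w) - (x + (1 - w))) =
                1 + (1 + x - w) * (2 * w - x)); last by ring.
Qed.

Lemma T3eq (R : realType) (mu : probability (measurableTypeR R) R) A :
  measurable A -> dbl (Psi3 mu A) = dbl (Q3 mu A).
Proof.
move=> mA; have mP := @mPsi3 R mu A mA.
have P0 := @Psi3_ge0 R mu A.
rewrite /dbl.
transitivity (\int[@lebesgue_measure R]_u1 \int[@lebesgue_measure R]_x
   Psi3 mu A u1 (1 - x)%R)%E.
  apply: eq_integral => u1 _; apply/esym.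
  apply: (@int_refl R 1 (Psi3 mu A u1)) => //.
  by apply: (@mjoint_comp R (Psi3 mu A) _ _ (fun _ : R => u1) (fun x : R => x) mP); mreal2.
transitivity (\int[@lebesgue_measure R]_w \int[@lebesgue_measure R]_x
   Psi3 mu A (1 - w)%R (1 - x)%R)%E.
  apply/esym.
  apply: (@int_refl R 1 (fun u1 => \int[@lebesgue_measure R]_x Psi3 mu A u1 (1 - x)%R)%E).
    apply: (@mpar R (fun u1 x => Psi3 mu A u1 (1 - x)%R)) => //.
    by apply: (@mjoint_comp R (Psi3 mu A) _ _ fst (fun p : R * R => 1 - p.2) mP); mreal2.
  by move=> u1; apply: integral_ge0.
transitivity (\int[@lebesgue_measure R]_x \int[@lebesgue_measure R]_w
   Psi3 mu A (1 - w)%R (1 - x)%R)%E.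
  apply: (@dswap R (fun w x => Psi3 mu A (1 - w)%R (1 - x)%R)) => //.
  by apply: (@mjoint_comp R (Psi3 mu A) _ _ (fun p : R * R => 1 - p.1)
     (fun p : R * R => 1 - p.2) mP); mreal2.
apply: eq_integral => x _; apply: eq_integral => w _.
rewrite /Psi3 /Q3 /bb cnd3.
rewrite (_ : 1 - (1 - x) = x); last by ring.
by rewrite (_ : 1 + (1 - x) * (2 - (1 - w) - (1 - x)) =
                1 + (1 - x) * (x + w)); last by ring.
Qed.

Arguments FF {R}. Arguments bb {R}. Arguments cnd {R}. Arguments kk {R}.
Arguments rhs1 {R}. Arguments Psi1 {R}. Arguments Psi2 {R}. Arguments Psi3 {R}.
Arguments Psi {R}. Arguments Phi {R}. Arguments dbl {R}.
Set Implicit Arguments. Unset Strict Implicit.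

Lemma Rgen (R : realType) (mu : probability (measurableTypeR R) R) (A : set (measurableTypeR R)) (H : R -> R -> R) :
  measurable A -> measurable_fun setT (fun p : R * R => H p.1 p.2) ->
  ((3^-1)%:E * \int[lebesgue_measure]_x \int[lebesgue_measure]_w
     ((fXW x w)%:E * \int[mu]_c (\1_A (x * c + H x w))%:E) =
   dbl (fun x w => (ind R (cnd x w) * x)%:E * FF mu A x (H x w)) +
   dbl (fun x w => (ind R (cnd x w) * x)%:E * FF mu A x (H x w)))%E.
Proof.
move=> mA mH.
have mG : measurable_fun setT (fun p : R * R =>
    ((ind R (cnd p.1 p.2) * p.1)%:E * FF mu A p.1 (H p.1 p.2))%E).
  apply: emeasurable_funM; first by apply/measurable_EFinP; rewrite /cnd; mreal2.
  by apply: mFFc => //; mreal2.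
have G0 : forall x w : R, (0 <= (ind R (cnd x w) * x)%:E * FF mu A x (H x w))%E.
  move=> x w; apply: mule_ge0; last exact: FF_ge0.
  rewrite lee_fin; apply: ind_coef_ge0; rewrite /cnd => /andP[/andP[]]; lra.
rewrite -(@dscale R (fun x w => (fXW x w)%:E * FF mu A x (H x w))%E); last 3 first.
- apply: emeasurable_funM; first by apply/measurable_EFinP; rewrite /fXW; mreal2.
  by apply: mFFc => //; mreal2.
- move=> x w; apply: mule_ge0; last exact: FF_ge0.
  by rewrite lee_fin /fXW /ind; case: ifP => [/andP[/andP[? _] _]|_]; [lra|lra].
- by rewrite lee_fin invr_ge0.
rewrite /dbl -(@dadd R (fun x w => (ind R (cnd x w) * x)%:E * FF mu A x (H x w))%E
   (fun x w => (ind R (cnd x w) * x)%:E * FF mu A x (H x w))%E) //.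
apply: eq_integral => x _; apply: eq_integral => w _.
rewrite muleA -EFinM -ge0_muleDl; last 2 first.
  by rewrite lee_fin; apply: ind_coef_ge0; rewrite /cnd => /andP[/andP[]]; lra.
  by rewrite lee_fin; apply: ind_coef_ge0; rewrite /cnd => /andP[/andP[]]; lra.
rewrite -EFinD /fXW /cnd.
congr ((_)%:E * _)%E.
by field.
Qed.


Arguments FF {R}. Arguments bb {R}. Arguments cnd {R}. Arguments kk {R}.
Arguments rhs1 {R}. Arguments Psi1 {R}. Arguments Psi2 {R}. Arguments Psi3 {R}.
Arguments Psi {R}. Arguments Phi {R}. Arguments dbl {R}.
Set Implicit Arguments. Unset Strict Implicit.

Lemma final_arith (R : realType) (a b c d1 d2 d3 q2 q3 : \bar R) :
  a = (d1 + d1)%E -> b = (q2 + q2)%E -> c = (q3 + q3)%E -> d2 = q2 -> d3 = q3 ->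
  (d1 + d2 + d3 + (d1 + d2 + d3) = a + (b + (c + 0)))%E.
Proof.
move=> -> -> -> -> ->; rewrite adde0.
by rewrite [LHS]addeACA [X in (X + _)%E]addeACA -addeA.
Qed.

Theorem lemma9p1 (R : realType) (mu : probability (measurableTypeR R) R) :
  (forall A : set (measurableTypeR R), measurable A -> mu A = law_rhs1 mu A) ->
  forall A : set (measurableTypeR R), measurable A -> mu A = law_rhs2 mu A.
Proof.
move=> Hfix A mA.
rewrite Hfix // (LHS3 mu mA) /law_rhs2 !big_ord_recl big_ord0 /= /h /=.
have e1 := @Rgen R mu A (fun x w => 1 + w * (2 - x - w)) mA ltac:(mreal2).
have e2 := @Rgen R mu A (fun x w => 1 + (1 + x - w) * (2 * w - x)) mA ltac:(mreal2).
have e3 := @Rgen R mu A (fun x w => 1 + (1 - x) * (x + w)) mA ltac:(mreal2).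
cbv beta in e1; cbv beta in e2; cbv beta in e3.
apply: (@final_arith R _ _ _ _ _ _ (dbl (Q2 mu A)) (dbl (Q3 mu A))).
- exact: e1.
- exact: e2.
- exact: e3.
- exact: T2eq.
- exact: T3eq.
Show.
Qed.
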